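(* Let $G^\sigma$ be an oriented graph whose underlying graph is a complete multipartite graph. If every cycle on $4$ vertices in $G^\sigma$ is evenly-oriented, then any two vertices lying in the same part of the multipartition are uniform twins or opposite twins.
   Context: An oriented graph $G^\sigma$ is a simple graph $G$ (underlying graph) together with an orientation of each edge; write $s_{xy}=1$ if there is an arc from $x$ to $y$, $s_{xy}=-1$ if there is an arc from $y$ to $x$, $s_{xy}=0$ otherwise. For an even cycle $u_1u_2\cdots u_ku_1$, its sign is the sign of $\prod_{i=1}^k s_{u_iu_{i+1}}$ with $u_{k+1}=u_1$; the cycle is evenly-oriented if the sign is positive and oddly-oriented if negative. For a common neighbor $w$ of two nonadjacent vertices $u,v$: the edges among $u,v,w$ have uniform orientations if the arcs go from both $u,v$ to $w$ or from $w$ to both $u,v$; opposite orientations if one arc goes from $u$ (resp. $v$) to $w$ and the other from $w$ to $v$ (resp. $u$). Nonadjacent $u,v$ are uniform (resp. opposite) twins if $N(u)=N(v)$ and for every common neighbor the edges have uniform (resp. opposite) orientations. *)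

(* Defs.v *)
From mathcomp Require Import all_boot all_order all_algebra.
Set Implicit Arguments. Unset Strict Implicit. Unset Printing Implicit Defensive.
Import GRing.Theory Num.Theory.
Local Open Scope ring_scope.

Definition oriented_graph (T : finType) (arc : rel T) : Prop :=
  (forall x, ~~ arc x x) /\ (forall x y, arc x y -> ~~ arc y x).

Definition adj (T : finType) (arc : rel T) : rel T :=
  fun x y => arc x y || arc y x.

Definition sgn (T : finType) (arc : rel T) (x y : T) : int :=
  if arc x y then 1 else if arc y x then -1 else 0.

Definition complete_multipartite (T : finType) (arc : rel T) (part : T -> nat) : Prop :=
  forall x y, adj arc x y = (part x != part y).

Definition all_C4_even (T : finType) (arc : rel T) : Prop :=
  forall u1 u2 u3 u4 : T,
    uniq [:: u1; u2; u3; u4] ->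
    adj arc u1 u2 -> adj arc u2 u3 -> adj arc u3 u4 -> adj arc u4 u1 ->
    0 < sgn arc u1 u2 * sgn arc u2 u3 * sgn arc u3 u4 * sgn arc u4 u1.

Definition same_nbhd (T : finType) (arc : rel T) (u v : T) : Prop :=
  forall w, adj arc u w = adj arc v w.

Definition uniform_twins (T : finType) (arc : rel T) (u v : T) : Prop :=
  ~~ adj arc u v /\ same_nbhd arc u v /\
  forall w, adj arc u w -> adj arc v w ->
    (arc u w && arc v w) || (arc w u && arc w v).

Definition opposite_twins (T : finType) (arc : rel T) (u v : T) : Prop :=
  ~~ adj arc u v /\ same_nbhd arc u v /\
  forall w, adj arc u w -> adj arc v w ->
    (arc u w && arc w v) || (arc v w && arc w u).

(* Main.v *)
Require Import Defs.
From mathcomp Require Import all_boot all_order all_algebra.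

Lemma key (p p' q q' r r' s s' : bool) :
  ~~ (p && p') -> ~~ (q && q') -> ~~ (r && r') -> ~~ (s && s') ->
  p || p' -> q || q' -> r || r' -> s || s' ->
  p = q' -> s' != r ->
  (0 < (if p then 1 else if p' then -1 else 0) * (if q then 1 else if q' then -1 else 0)
     * (if r then 1 else if r' then -1 else 0) * (if s then 1 else if s' then -1 else 0) :> int)%R ->
  False.
Proof. by case: p; case: p'; case: q; case: q'; case: r; case: r'; case: s; case: s'. Qed.

Theorem lemma2p9 (T : finType) (arc : rel T) (part : T -> nat) :
  oriented_graph arc ->
  complete_multipartite arc part ->
  all_C4_even arc ->
  forall u v : T, u != v -> part u = part v ->
    uniform_twins arc u v \/ opposite_twins arc u v.
Proof.
move=> [irr asym] cm C4 u v nuv puv.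
have as2 x y : ~~ (arc x y && arc y x).
  by apply/negP => /andP [h1 h2]; move: (asym _ _ h1); rewrite h2.
have nadj : ~~ adj arc u v by rewrite cm puv eqxx.
have sn : same_nbhd arc u v by move=> w; rewrite !cm puv.
have adjC x y : adj arc x y = adj arc y x by rewrite /adj orbC.
have adjne x y : adj arc x y -> x != y.
  by apply: contraL => /eqP ->; rewrite /adj orbb; apply: irr.
have C4' w w1 : adj arc u w -> adj arc u w1 -> arc u w = arc v w ->
    arc u w1 != arc v w1 -> False.
  move=> a1 a2 t1 t2.
  have a1' : adj arc v w by rewrite -sn.
  have a2' : adj arc v w1 by rewrite -sn.
  have ww1 : w != w1 by apply: contraNneq t2 => <-; rewrite t1.
  have U : uniq [:: u; w; v; w1].
    rewrite /= !inE !negb_or (adjne _ _ a1) nuv (adjne _ _ a2) /=.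
    by rewrite eq_sym (adjne _ _ a1') ww1 (adjne _ _ a2').
  have b1 : adj arc w v by rewrite adjC.
  have b2 : adj arc w1 u by rewrite adjC.
  have := C4 u w v w1 U a1 b1 a2' b2.
  move: a1 b1 a2' b2; rewrite /adj /sgn => a1 b1 a2' b2.
  by apply: key.
case: (boolP [forall w, adj arc u w ==> (arc u w == arc v w)]) => [/forallP H | /forallPn [w1]].
  left; split=> //; split=> // w a1 a2.
  move: (implyP (H w) a1) => /eqP e; rewrite -e.
  case: (boolP (arc u w)) => //= nu.
  move: a1 a2; rewrite /adj -e (negbTE nu) /= => -> /=.
  by [].
rewrite negb_imply => /andP [a2 t2].
right; split=> //; split=> // w a1 a1'.
have t : arc u w != arc v w by apply/negP => /eqP t; exact: (C4' w w1 a1 a2 t t2).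
move: t a1 a1'; rewrite /adj.
by case: (arc u w); case: (arc v w); case: (arc w u); case: (arc w v).
Qed.
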